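(* Let $x,y$ be positive integers and $z,w$ positive real numbers such that $w-z$ is a positive integer with $w-z\geq x$. Then $$\sum_{j=x}^{w-z}\binom{j}{y}\binom{w-j}{z}=\sum_{i=\max\{0,\,x+y+z-w\}}^{y} \binom{x}{i}\binom{w-x+1}{z+y-i+1}.$$
   Context: Binomial coefficients are generalized binomial coefficients: for real $a,b$, $\binom{a}{b}=\frac{\Gamma(a+1)}{\Gamma(b+1)\Gamma(a-b+1)}$, where $\Gamma$ is the Gamma function; in particular, if $b$ is a positive integer then $\binom{a}{b}=\frac{a(a-1)\cdots(a-b+1)}{b!}$. *)

(* Defs.v *)
From Stdlib Require Import Reals.
From Coquelicot Require Import Coquelicot.
Open Scope R_scope.

Fixpoint rising (s : R) (n : nat) : R :=
  match n with
  | O => s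
  | S k => rising s k * (s + INR (S k))
  end.

(* Euler--Gauss definition of the Gamma function:
   Gamma s = lim_{n -> oo} n! n^s / (s (s+1) ... (s+n)),
   valid for every real s that is not a nonpositive integer. *)
Definition Gamma (s : R) : R :=
  real (Lim_seq (fun n => INR (Factorial.fact n) * Rpower (INR n) s / rising s n)).

Definition Binom (a b : R) : R :=
  Gamma (a + 1) / (Gamma (b + 1) * Gamma (a - b + 1)).

(* Main.v *)
Require Import Defs.
From Stdlib Require Import Reals.
From Coquelicot Require Import Coquelicot.
From Stdlib Require Import Lra Lia Factorial.
Open Scope R_scope.

Definition gs (s : R) (n : nat) : R :=
  INR (Factorial.fact n) * Rpower (INR n) s / rising s n.

Lemma Gamma_gs s : Gamma s = real (Lim_seq (gs s)).
Proof. reflexivity. Qed.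

Lemma rising_pos s n : 0 < s -> 0 < rising s n.
Proof.
  intros Hs; induction n as [|n IH]; simpl; auto.
  apply Rmult_lt_0_compat; auto. pose proof (pos_INR n). destruct n; lra.
Qed.

Lemma fact_pos n : 0 < INR (Factorial.fact n).
Proof. apply lt_0_INR, lt_O_fact. Qed.

Lemma gs_pos s n : 0 < s -> 0 < gs s n.
Proof.
  intros Hs; unfold gs, Rdiv. apply Rmult_lt_0_compat.
  apply Rmult_lt_0_compat. apply fact_pos. unfold Rpower; apply exp_pos.
  apply Rinv_0_lt_compat, rising_pos; auto.
Qed.

Lemma ln_le_sub1 t : 0 < t -> ln t <= t - 1.
Proof.
  intros Ht. rewrite <- (ln_exp (t - 1)). apply ln_le; auto.
  pose proof (exp_ineq1_le (t-1)). lra.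
Qed.

Lemma ln_bounds p q : 0 < p -> p <= q ->
  (q - p) / q <= ln q - ln p <= (q - p) / p.
Proof.
  intros Hp Hq. split.
  - assert (H0 : 0 < p / q) by (apply Rdiv_lt_0_compat; lra).
    pose proof (ln_le_sub1 (p / q) H0) as H.
    rewrite (ln_div p q) in H by lra.
    assert (p/q - 1 = - ((q-p)/q)) by (field; lra). lra.
  - assert (H0 : 0 < q / p) by (apply Rdiv_lt_0_compat; lra).
    pose proof (ln_le_sub1 (q / p) H0) as H.
    rewrite (ln_div q p) in H by lra.
    assert (q/p - 1 = (q-p)/p) by (field; lra). lra.
Qed.

Definition Ek (s N : R) : R :=
  s * (ln (N + 1) - ln N) - (ln (s + N + 1) - ln (N + 1)).

Lemma gs_step s k : 0 < s ->
  gs s (S (S k)) = gs s (S k) * exp (Ek s (INR (S k))).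
Proof.
  intros Hs. set (N := INR (S k)).
  assert (HN : 0 < N) by (apply lt_0_INR; lia).
  assert (e : INR (S (S k)) = N + 1) by (unfold N; rewrite (S_INR (S k)); ring).
  unfold gs, Ek. rewrite fact_simpl, mult_INR.
  change (rising s (S (S k))) with (rising s (S k) * (s + INR (S (S k)))). rewrite e.
  replace (s * (ln (N + 1) - ln N) - (ln (s + N + 1) - ln (N + 1)))
    with (ln (N+1) + s * ln (N+1) + - (s * ln N) + - ln (s+N+1)) by ring.
  rewrite !exp_plus, !exp_Ropp, !exp_ln by lra.
  unfold Rpower. fold N.
  replace (INR (S (S k))) with (N+1) by (symmetry; exact e).
  pose proof (rising_pos s (S k) Hs). pose proof (exp_pos (s * ln N)).
  field. repeat split; lra.
Qed.

Lemma Ek_bounds s N : 0 < s -> 1 <= N ->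
  0 <= Ek s N <= s * (s + 1) * (1 / N - 1 / (N + 1)).
Proof.
  intros Hs HN. unfold Ek.
  destruct (ln_bounds N (N+1)) as [a1 a2]; try lra.
  destruct (ln_bounds (N+1) (s+N+1)) as [b1 b2]; try lra.
  replace (N + 1 - N) with 1 in a1, a2 by ring.
  replace (s + N + 1 - (N + 1)) with s in b1, b2 by ring.
  split.
  - assert (s * (1 / (N+1)) = s / (N+1)) by (field; lra).
    assert (s * (1/(N+1)) <= s * (ln (N + 1) - ln N)) by (apply Rmult_le_compat_l; lra).
    lra.
  - assert (s * (ln (N + 1) - ln N) <= s * (1/N)) by (apply Rmult_le_compat_l; lra).
    assert (E1 : s * (1/N) - s / (s+N+1) = s * (s+1) * (1 / (N * (s + N + 1)))) by (field; lra).
    assert (E2 : s * (s + 1) * (1 / N - 1 / (N + 1)) = s * (s+1) * (1 / (N * (N + 1)))) by (field; lra).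
    assert (1 / (N * (s + N + 1)) <= 1 / (N * (N + 1))).
    { apply Rmult_le_reg_l with (N * (N+1) * (N * (s+N+1))).
      apply Rmult_lt_0_compat; apply Rmult_lt_0_compat; lra.
      replace (N * (N + 1) * (N * (s + N + 1)) * (1 / (N * (s + N + 1)))) with (N * (N+1)) by (field; lra).
      replace (N * (N + 1) * (N * (s + N + 1)) * (1 / (N * (N + 1)))) with (N * (s+N+1)) by (field; lra).
      nra. }
    assert (s * (s+1) * (1 / (N * (s + N + 1))) <= s * (s+1) * (1 / (N * (N + 1)))).
    { apply Rmult_le_compat_l; nra. }
    lra.
Qed.

Lemma gs_incr s k : 0 < s -> gs s (S k) <= gs s (S (S k)).
Proof.
  intros Hs. rewrite gs_step by auto.
  pose proof (gs_pos s (S k) Hs).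
  destruct (Ek_bounds s (INR (S k))) as [h _]; auto.
  apply (le_INR 1); lia.
  pose proof (exp_ineq1_le (Ek s (INR (S k)))).
  assert (gs s (S k) * 1 <= gs s (S k) * exp (Ek s (INR (S k)))) by (apply Rmult_le_compat_l; lra).
  lra.
Qed.

Lemma gs_bound s k : 0 < s ->
  gs s (S k) <= gs s 1 * exp (s * (s+1) * (1 - 1 / INR (S k))).
Proof.
  intros Hs. induction k as [|k IH].
  - replace (1 - 1 / INR 1) with 0 by (simpl; field). rewrite Rmult_0_r, exp_0. lra.
  - rewrite gs_step by auto.
    set (N := INR (S k)) in *.
    assert (HN : 1 <= N) by (apply (le_INR 1); lia).
    replace (INR (S (S k))) with (N + 1) by (unfold N; rewrite (S_INR (S k)); ring).
    destruct (Ek_bounds s N) as [_ h]; auto.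
    pose proof (gs_pos s (S k) Hs).
    apply Rle_trans with (gs s 1 * exp (s * (s + 1) * (1 - 1 / N)) * exp (Ek s N)).
    apply Rmult_le_compat_r; [left; apply exp_pos|auto].
    rewrite Rmult_assoc, <- exp_plus. apply Rmult_le_compat_l.
    left; apply gs_pos; auto.
    destruct (Req_dec (s * (s + 1) * (1 - 1 / N) + Ek s N) (s * (s + 1) * (1 - 1 / (N + 1)))) as [E|E].
    rewrite E; lra. left; apply exp_increasing. lra.
Qed.

Lemma gs_ex s : 0 < s -> ex_finite_lim_seq (fun k => gs s (S k)).
Proof.
  intros Hs. apply ex_finite_lim_seq_incr with (M := gs s 1 * exp (s * (s+1))).
  intros n; apply gs_incr; auto.
  intros k. eapply Rle_trans. apply gs_bound; auto.
  apply Rmult_le_compat_l. left; apply gs_pos; auto.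
  assert (0 < 1 / INR (S k)) by (apply Rdiv_lt_0_compat; [lra| apply lt_0_INR; lia]).
  assert (0 < s * (s+1)) by nra.
  left; apply exp_increasing. nra.
Qed.

Lemma gs_lim s : 0 < s -> is_lim_seq (gs s) (Gamma s).
Proof.
  intros Hs. rewrite Gamma_gs, <- Lim_seq_incr_1.
  apply is_lim_seq_incr_1.
  destruct (gs_ex s Hs) as [l Hl].
  rewrite (is_lim_seq_unique _ _ Hl). exact Hl.
Qed.

Lemma Gamma_pos s : 0 < s -> 0 < Gamma s.
Proof.
  intros Hs. pose proof (gs_lim s Hs) as H.
  apply is_lim_seq_incr_1 in H.
  assert (gs s 1 <= Gamma s).
  { apply (is_lim_seq_le (fun _ => gs s 1) (fun k => gs s (S k)) (gs s 1) (Gamma s)); auto.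
    intros n. induction n. lra. eapply Rle_trans; [exact IHn| apply gs_incr; auto].
    apply is_lim_seq_const. }
  pose proof (gs_pos s 1 Hs). lra.
Qed.


Lemma lim_frac c : 0 < c -> is_lim_seq (fun n => INR n / (INR n + c)) 1.
Proof.
  intros Hc.
  assert (H1 : is_lim_seq (fun n => INR n + c) p_infty).
  { eapply is_lim_seq_plus. apply is_lim_seq_INR. apply is_lim_seq_const. simpl. constructor. }
  apply is_lim_seq_inv in H1; [|discriminate]. simpl in H1.
  assert (H2 : is_lim_seq (fun n => 1 - c * / (INR n + c)) (1 - c * 0)).
  { apply is_lim_seq_minus'. apply is_lim_seq_const. apply is_lim_seq_mult'. apply is_lim_seq_const. exact H1. }
  replace (1 - c * 0) with 1 in H2 by ring.
  eapply is_lim_seq_ext; [|exact H2]. intros n. simpl.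
  pose proof (pos_INR n). field. lra.
Qed.

Lemma rising_shift s n : s * rising (s + 1) n = rising s (S n).
Proof.
  induction n as [|n IH].
  - simpl. ring.
  - change (rising (s+1) (S n)) with (rising (s+1) n * (s + 1 + INR (S n))).
    change (rising s (S (S n))) with (rising s (S n) * (s + INR (S (S n)))).
    rewrite <- IH. rewrite (S_INR (S n)). ring.
Qed.

Lemma Gamma_succ s : 0 < s -> Gamma (s + 1) = s * Gamma s.
Proof.
  intros Hs.
  assert (H : is_lim_seq (fun n => gs s n * s * (INR n / (INR n + (s + 1)))) (Gamma s * s * 1)).
  { apply is_lim_seq_mult'. apply is_lim_seq_mult'. apply gs_lim; auto.
    apply is_lim_seq_const. apply lim_frac; lra. }
  assert (H' : is_lim_seq (gs (s+1)) (Gamma s * s * 1)).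
  { eapply is_lim_seq_ext_loc; [|exact H]. exists 1%nat. intros n Hn.
    assert (HN : 0 < INR n) by (apply lt_0_INR; lia).
    unfold gs. rewrite Rpower_plus, Rpower_1 by auto.
    assert (Er : rising (s+1) n = rising s n * (s + INR n + 1) / s).
    { pose proof (rising_shift s n) as R. change (rising s (S n)) with (rising s n * (s + INR (S n))) in R.
      rewrite S_INR in R. replace (rising s n * (s + INR n + 1)) with (s * rising (s + 1) n) by (rewrite R; ring). field. lra. }
    rewrite Er. pose proof (rising_pos s n Hs).
    unfold Rpower. pose proof (exp_pos (s * ln (INR n))).
    field. repeat split; lra. }
  pose proof (gs_lim (s+1) ltac:(lra)) as H2.
  apply is_lim_seq_unique in H'. apply is_lim_seq_unique in H2.
  rewrite H' in H2. injection H2. intros E. rewrite <- E. ring.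
Qed.

Lemma rising_one n : rising 1 n = INR (fact (S n)).
Proof.
  induction n as [|n IH].
  - simpl. ring.
  - change (rising 1 (S n)) with (rising 1 n * (1 + INR (S n))).
    rewrite IH. rewrite (fact_simpl (S n)), mult_INR, (S_INR (S n)). ring.
Qed.

Lemma Gamma_one : Gamma 1 = 1.
Proof.
  assert (H' : is_lim_seq (gs 1) 1).
  { eapply is_lim_seq_ext_loc; [|apply (lim_frac 1); lra]. exists 1%nat. intros n Hn.
    assert (HN : 0 < INR n) by (apply lt_0_INR; lia).
    unfold gs. rewrite Rpower_1 by auto. rewrite rising_one, fact_simpl, mult_INR, S_INR.
    pose proof (fact_pos n). field. lra. }
  rewrite Gamma_gs, (is_lim_seq_unique _ _ H'). reflexivity.
Qed.

Lemma rising_zero k n : (k <= n)%nat -> rising (- INR k) n = 0.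
Proof.
  induction n as [|n IH]; intros Hk.
  - assert (k = 0%nat) by lia. subst. simpl. ring.
  - change (rising (- INR k) (S n)) with (rising (- INR k) n * (- INR k + INR (S n))).
    destruct (Nat.eq_dec k (S n)) as [->|Hne]. ring.
    rewrite IH by lia. ring.
Qed.

Lemma Gamma_pole k : Gamma (- INR k) = 0.
Proof.
  assert (H' : is_lim_seq (gs (- INR k)) 0).
  { eapply is_lim_seq_ext_loc; [|apply is_lim_seq_const]. exists k. intros n Hn.
    unfold gs. rewrite rising_zero by auto. unfold Rdiv. rewrite Rinv_0. ring. }
  rewrite Gamma_gs, (is_lim_seq_unique _ _ H'). reflexivity.
Qed.

Fixpoint pr (s : R) (d : nat) : R :=
  match d with O => 1 | S d' => pr s d' * (s + INR d') end.

Lemma Gamma_pr s d : 0 < s -> Gamma (s + INR d) = Gamma s * pr s d.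
Proof.
  intros Hs. induction d as [|d IH].
  - simpl. rewrite Rplus_0_r. ring.
  - rewrite S_INR. replace (s + (INR d + 1)) with ((s + INR d) + 1) by ring.
    pose proof (pos_INR d).
    rewrite Gamma_succ by lra. rewrite IH. simpl. ring.
Qed.

Lemma Gamma_nat d : Gamma (INR d + 1) = INR (fact d).
Proof.
  rewrite Rplus_comm, Gamma_pr by lra. rewrite Gamma_one.
  induction d as [|d IH]. simpl; ring.
  simpl pr. rewrite Rmult_1_l in *. rewrite IH, fact_simpl, mult_INR, S_INR. ring.
Qed.

Fixpoint cb (r : R) (k : nat) : R :=
  match k with O => 1 | S k' => cb r k' * (r - INR k') / (INR k' + 1) end.

Lemma cb_shift r k : cb (r + 1) (S k) = cb r k * (r + 1) / (INR k + 1).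
Proof.
  induction k as [|k IH].
  - simpl. field.
  - change (cb (r+1) (S (S k))) with (cb (r+1) (S k) * (r + 1 - INR (S k)) / (INR (S k) + 1)).
    rewrite IH. simpl cb. rewrite S_INR. pose proof (pos_INR k). field. lra.
Qed.

Lemma cb_pr s d : cb (s + INR d - 1) d * INR (fact d) = pr s d.
Proof.
  induction d as [|d IH].
  - simpl. ring.
  - rewrite S_INR. replace (s + (INR d + 1) - 1) with ((s + INR d - 1) + 1) by ring.
    rewrite cb_shift, fact_simpl, mult_INR, S_INR. simpl pr. rewrite <- IH.
    pose proof (pos_INR d). field. lra.
Qed.

Lemma Binom_cb T b d : T - b = INR d -> 0 < b + 1 -> Binom T b = cb T d.
Proof.
  intros E Hb. unfold Binom.
  replace (T - b + 1) with (INR d + 1) by lra. rewrite Gamma_nat.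
  replace (T + 1) with ((b + 1) + INR d) by lra. rewrite Gamma_pr by auto.
  rewrite <- cb_pr. replace (b + 1 + INR d - 1) with T by lra.
  pose proof (Gamma_pos (b+1) Hb). pose proof (fact_pos d).
  field. lra.
Qed.

Lemma Binom_sym T b : Binom T b = Binom T (T - b).
Proof.
  unfold Binom. replace (T - (T - b) + 1) with (b + 1) by ring. rewrite (Rmult_comm (Gamma (b + 1))). reflexivity.
Qed.

Lemma Binom_nat j y : Binom (INR j) (INR y) = cb (INR j) y.
Proof.
  destruct (Compare_dec.le_lt_dec y j) as [h|h].
  - rewrite Binom_sym. apply Binom_cb. ring.
    rewrite <- minus_INR by auto. pose proof (pos_INR (j - y)). lra.
  - unfold Binom. replace (INR j - INR y + 1) with (- INR (y - j - 1)).
    rewrite Gamma_pole. unfold Rdiv. rewrite Rmult_0_r, Rinv_0, Rmult_0_r.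
    symmetry.
    assert (forall a, (j < a)%nat -> cb (INR j) a = 0).
    { induction a as [|a IH]; intros Ha. lia. simpl.
      destruct (Nat.eq_dec a j) as [->|Hne]. unfold Rdiv. ring.
      rewrite IH by lia. unfold Rdiv; ring. }
    apply H; lia.
    replace (y - j - 1)%nat with (y - (j + 1))%nat by lia.
    rewrite minus_INR, plus_INR by lia. simpl. ring.
Qed.

Lemma cb_nat_zero t a : (t < a)%nat -> cb (INR t) a = 0.
Proof.
  induction a as [|a IH]; intros Ha. lia. simpl.
  destruct (Nat.eq_dec a t) as [->|Hne]. unfold Rdiv. ring.
  rewrite IH by lia. unfold Rdiv; ring.
Qed.

Lemma cb_pascal r k : cb (r + 1) (S k) = cb r (S k) + cb r k.
Proof.
  rewrite cb_shift. simpl. pose proof (pos_INR k). field. lra.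
Qed.

Fixpoint sn (g : nat -> R) (n : nat) : R :=
  match n with O => g O | S n' => sn g n' + g (S n') end.

Lemma sn_ext g h n : (forall i, (i <= n)%nat -> g i = h i) -> sn g n = sn h n.
Proof.
  induction n as [|n IH]; intros H; simpl.
  apply H; lia. rewrite IH, H; auto. all: intros; apply H; lia.
Qed.

Lemma sn_plus g h n : sn (fun i => g i + h i) n = sn g n + sn h n.
Proof. induction n as [|n IH]; simpl; auto. rewrite IH; ring. Qed.

Lemma sn_peel g n : sn g (S n) = g O + sn (fun i => g (S i)) n.
Proof. induction n as [|n IH]; simpl in *; auto. rewrite IH; ring. Qed.

Lemma sum_n_m_sn f a b : (a <= b)%nat -> sum_n_m f a b = sn (fun k => f (a + k)%nat) (b - a).
Proof.
  intros H. induction b as [|b IH].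
  - assert (a = 0%nat) by lia. subst. rewrite sum_n_n. reflexivity.
  - destruct (Nat.eq_dec a (S b)) as [->|Hne].
    + rewrite sum_n_n, Nat.sub_diag. simpl. f_equal; lia.
    + rewrite sum_n_Sm by lia. rewrite IH by lia.
      replace (S b - a)%nat with (S (b - a)) by lia. simpl. unfold plus; simpl.
      f_equal. f_equal. lia.
Qed.

Lemma sn_zero_prefix g lo y : (forall i, (i < lo)%nat -> g i = 0) -> (lo <= y)%nat ->
  sn g y = sn (fun k => g (lo + k)%nat) (y - lo).
Proof.
  intros H Hy. replace y with (lo + (y - lo))%nat at 1 by lia.
  generalize (y - lo)%nat as d. intros d.
  induction d as [|d IH].
  - rewrite Nat.add_0_r. simpl. rewrite Nat.add_0_r.
    clear Hy. induction lo as [|lo IHlo]. reflexivity.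
    simpl. rewrite IHlo. rewrite H by lia. ring. intros; apply H; lia.
  - rewrite Nat.add_succ_r. simpl. rewrite IH. do 2 f_equal. lia.
Qed.

Definition Dz (z : R) (k : nat) : R := cb (z + INR k) k.
Definition Ez (z : R) (n a : nat) : R :=
  if Nat.leb a n then cb (z + INR n + 1) (n - a) else 0.

Lemma C2 z n : forall a, sn (fun t => cb (INR t) a * Dz z (n - t)) n = Ez z n a.
Proof.
  induction n as [|n IH]; intros a.
  - change (cb (INR 0) a * Dz z (0 - 0) = Ez z 0 a). unfold Ez, Dz. destruct a as [|a]. simpl. ring.
    simpl Nat.leb. cbv iota. rewrite cb_nat_zero by lia. ring.
  - rewrite sn_peel. simpl Nat.sub at 2. destruct a as [|a].
    + simpl cb at 2. 
      transitivity (Dz z (S n) + sn (fun t => cb (INR t) 0 * Dz z (n - t)) n).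
      { simpl cb. rewrite Nat.sub_0_r. ring. }
      rewrite IH. unfold Ez, Dz. simpl Nat.leb. cbv iota. rewrite !Nat.sub_0_r.
      replace (z + INR (S n) + 1) with ((z + INR (S n)) + 1) by ring.
      rewrite cb_pascal. f_equal. f_equal. rewrite S_INR; ring.
    + rewrite cb_nat_zero by lia.
      transitivity (sn (fun t => cb (INR t) (S a) * Dz z (n - t)) n +
                    sn (fun t => cb (INR t) a * Dz z (n - t)) n).
      { rewrite <- sn_plus, Rmult_0_l, Rplus_0_l. apply sn_ext; intros i _.
        rewrite S_INR, cb_pascal. ring. }
      rewrite !IH. unfold Ez.
      destruct (Nat.leb_spec (S a) n); destruct (Nat.leb_spec a n);
        destruct (Nat.leb_spec (S a) (S n)); try lia.
      * replace (n - a)%nat with (S (n - S a)) by lia.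
        replace (S n - S a)%nat with (S (n - S a)) by lia.
        replace (z + INR (S n) + 1) with ((z + INR n + 1) + 1) by (rewrite S_INR; ring). rewrite (cb_pascal (z + INR n + 1)). ring.
      * replace a with n by lia. rewrite !Nat.sub_diag. simpl. ring.
      * ring.
Qed.

Lemma C1 z n x : forall y,
  sn (fun t => cb (INR (x + t)) y * Dz z (n - t)) n =
  sn (fun i => cb (INR x) i * Ez z n (y - i)) y.
Proof.
  induction x as [|x IH]; intros y.
  - simpl plus. rewrite C2. destruct y as [|y].
    + simpl. ring.
    + rewrite sn_peel. simpl cb at 1. rewrite Nat.sub_0_r.
      transitivity (Ez z n (S y) + 0). ring. f_equal; [ring|].
      transitivity (sn (fun _ => 0) y).
      { clear. induction y as [|y IHy]; simpl. reflexivity. rewrite <- IHy; ring. }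
      apply sn_ext; intros i _. rewrite cb_nat_zero by lia. ring.
  - destruct y as [|y].
    + simpl. specialize (IH 0%nat). simpl in IH. rewrite <- IH.
      apply sn_ext; intros; ring.
    + transitivity (sn (fun t => cb (INR (x + t)) (S y) * Dz z (n - t)) n +
                    sn (fun t => cb (INR (x + t)) y * Dz z (n - t)) n).
      { rewrite <- sn_plus. apply sn_ext; intros i _.
        replace (INR (S x + i)) with (INR (x + i) + 1) by (rewrite <- S_INR; f_equal).
        rewrite cb_pascal. ring. }
      rewrite !IH. rewrite !sn_peel. change (cb (INR x) 0) with 1. change (cb (INR (S x)) 0) with 1.
      rewrite Rplus_assoc, <- sn_plus. f_equal. apply sn_ext; intros i _. simpl Nat.sub.
      rewrite S_INR, (cb_pascal (INR x)). ring.
Qed.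

Theorem lemma2p3 (x y : nat) (z w : R) (m : nat)
  (hx : (0 < x)%nat) (hy : (0 < y)%nat) (hz : 0 < z) (hw : 0 < w)
  (hm : w - z = INR m) (hm0 : (0 < m)%nat) (hxm : (x <= m)%nat) :
  sum_n_m (fun j => Binom (INR j) (INR y) * Binom (w - INR j) z) x m
  = sum_n_m (fun i => Binom (INR x) (INR i) *
                      Binom (w - INR x + 1) (z + INR y - INR i + 1))
      (Nat.max 0 (x + y - m)) y.
Proof.
  set (n := (m - x)%nat).
  set (lo := Nat.max 0 (x + y - m)).
  assert (Hlo : lo = (x + y - m)%nat) by reflexivity.
  assert (Hn : INR n = INR m - INR x) by (unfold n; rewrite minus_INR; auto).
  rewrite sum_n_m_sn by auto. rewrite sum_n_m_sn by (rewrite Hlo; lia).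
  fold n.
  transitivity (sn (fun t => cb (INR (x + t)) y * Dz z (n - t)) n).
  { apply sn_ext; intros k Hk. rewrite Binom_nat. f_equal.
    unfold Dz. replace (z + INR (n - k)) with (w - INR (x + k)).
    2:{ rewrite minus_INR by lia. rewrite plus_INR. lra. }
    apply Binom_cb.
    - rewrite minus_INR by lia. rewrite plus_INR. lra.
    - lra. }
  rewrite C1. rewrite (sn_zero_prefix _ lo); [ | | rewrite Hlo; lia].
  - apply sn_ext; intros k Hk.
    rewrite Binom_nat. f_equal.
    assert (Hi : (lo + k <= y)%nat) by lia.
    assert (Hi2 : (x + y <= m + (lo + k))%nat) by (rewrite Hlo; lia).
    unfold Ez. destruct (Nat.leb_spec (y - (lo + k)) n); [|unfold n in *; lia].
    replace (z + INR n + 1) with (w - INR x + 1) by lra.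
    symmetry. apply Binom_cb.
    + assert (E : ((n - (y - (lo + k))) + x + y = m + (lo + k))%nat) by (unfold n; lia).
      apply (f_equal INR) in E. rewrite !plus_INR in E. rewrite plus_INR. lra.
    + pose proof (le_INR _ _ Hi). pose proof (pos_INR y). lra.
  - intros i Hi. unfold Ez. destruct (Nat.leb_spec (y - i) n). unfold n in *; lia. ring.
Qed.
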